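(* Let $X_1, X_2 \subseteq \mathrm{VF}^n\times\mathrm{VF}^m$ with $\mathrm{pr}_{\le n}X_1=\mathrm{pr}_{\le n}X_2=Z$, let $\bar a\in\mathrm{VF}^n$, and suppose $\lim_{Z\to\bar a}X_i = L_i$ for $i=1,2$. Then $\lim_{Z\to\bar a}(X_1\cup X_2)=L_1\cup L_2$.
   Context: $\mathrm{VF}$ is an algebraically closed valued field with value group $\Gamma$, valuation $v$ and the valuation topology. For $\bar b\in\mathrm{VF}^k$, $\epsilon\in\Gamma$, $\mathfrak{o}(\bar b,\epsilon)=\{\bar c: v(c_i-b_i)>\epsilon\text{ for all }i\}$. For $X\subseteq\mathrm{VF}^n\times\mathrm{VF}^m$, $\mathrm{pr}_{\le n}X$ is its projection to $\mathrm{VF}^n$ and $\mathrm{fib}(X,\bar c)=\{\bar d:(\bar c,\bar d)\in X\}$. A set $L\subseteq\mathrm{VF}^m$ is a limit set of $X$ at $\bar a$ if for every $\epsilon\in\Gamma$ there is $\delta\in\Gamma$ such that whenever $\bar c\in\mathfrak{o}(\bar a,\delta)\cap(\mathrm{pr}_{\le n}X\setminus\{\bar a\})$, $\mathrm{fib}(X,\bar c)\subseteq\bigcup_{\bar b\in L'}\mathfrak{o}(\bar b,\epsilon)$ for some $L'\subseteq L$; it is minimal if no proper subset is a limit set of $X$ at $\bar a$. With $Z=\mathrm{pr}_{\le n}X$, the notation $\lim_{Z\to\bar a}X=L$ means that $L$ is a topologically closed minimal limit set of $X$ at $\bar a$. *)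

(* Defs.v *)
From HB Require Import structures.
From mathcomp Require Import all_boot all_order all_algebra.
Set Implicit Arguments. Unset Strict Implicit. Unset Printing Implicit Defensive.
Import Order.TTheory GRing.Theory Num.Theory.
Local Open Scope ring_scope.

Definition ordered_abelian_group (G : porderZmodType) : Prop :=
  (forall x y : G, (x <= y) || (y <= x)) /\
  (forall x y z : G, x <= y -> x + z <= y + z).

(* Extended value group Gamma ∪ {oo}: None stands for oo. *)
Definition ole (G : porderZmodType) (x y : option G) : bool :=
  match x, y with
  | _, None => true
  | None, Some _ => false
  | Some a, Some b => a <= b
  end.

Definition oadd (G : porderZmodType) (x y : option G) : option G :=
  match x, y with
  | Some a, Some b => Some (a + b)
  | _, _ => None
  end.

Definition vgt (G : porderZmodType) (eps : G) (x : option G) : bool :=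
  match x with None => true | Some b => eps < b end.

Definition is_valuation (K : fieldType) (G : porderZmodType) (v : K -> option G) : Prop :=
  [/\ forall x, v x = None <-> x = 0,
      forall x y, v (x * y) = oadd (v x) (v y),
      forall x y (g : option G), ole g (v x) -> ole g (v y) -> ole g (v (x + y))
    & forall g : G, exists x, v x = Some g].

Section VF.
Variables (K : fieldType) (G : porderZmodType) (v : K -> option G).

Definition ball_o (k : nat) (b : 'I_k -> K) (eps : G) (c : 'I_k -> K) : Prop :=
  forall i, vgt eps (v (c i - b i)).

Definition pr_le (n m : nat) (X : ('I_n -> K) * ('I_m -> K) -> Prop) (c : 'I_n -> K) : Prop :=
  exists d, X (c, d).

Definition fib (n m : nat) (X : ('I_n -> K) * ('I_m -> K) -> Prop) (c : 'I_n -> K) (d : 'I_m -> K) : Prop :=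
  X (c, d).

Definition is_limit_set (n m : nat) (X : ('I_n -> K) * ('I_m -> K) -> Prop)
    (a : 'I_n -> K) (L : ('I_m -> K) -> Prop) : Prop :=
  forall eps : G, exists delta : G, forall c : 'I_n -> K,
    ball_o a delta c -> pr_le X c -> c <> a ->
    exists L' : ('I_m -> K) -> Prop, (forall b, L' b -> L b) /\
      (forall d, fib X c d -> exists b, L' b /\ ball_o b eps d).

Definition is_min_limit_set (n m : nat) (X : ('I_n -> K) * ('I_m -> K) -> Prop)
    (a : 'I_n -> K) (L : ('I_m -> K) -> Prop) : Prop :=
  is_limit_set X a L /\
  forall L' : ('I_m -> K) -> Prop,
    (forall b, L' b -> L b) -> (exists b, L b /\ ~ L' b) -> ~ is_limit_set X a L'.

Definition vclosed (m : nat) (L : ('I_m -> K) -> Prop) : Prop :=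
  forall b, (forall eps : G, exists c, L c /\ ball_o b eps c) -> L b.

(* lim_{Z -> a} X = L, where Z = pr_{<=n} X *)
Definition lim_is (n m : nat) (X : ('I_n -> K) * ('I_m -> K) -> Prop)
    (a : 'I_n -> K) (L : ('I_m -> K) -> Prop) : Prop :=
  vclosed L /\ is_min_limit_set X a L.
End VF.

(* Main.v *)
Require Import Defs.
From HB Require Import structures.
From mathcomp Require Import all_boot all_order all_algebra.
From Stdlib Require Import Classical.
Set Implicit Arguments. Unset Strict Implicit. Unset Printing Implicit Defensive.
Import Order.TTheory GRing.Theory Num.Theory.
Local Open Scope ring_scope.

Definition mx (G : porderZmodType) (x y : G) := if x <= y then y else x.

Lemma mx_l (G : porderZmodType) (HG : ordered_abelian_group G) (x y : G) : x <= mx x y.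
Proof. rewrite /mx; case: ifP => [//|_]; exact: lexx. Qed.

Lemma mx_r (G : porderZmodType) (HG : ordered_abelian_group G) (x y : G) : y <= mx x y.
Proof.
rewrite /mx; case: ifP => [_|h]; first exact: lexx.
case: HG => tot _. by move: (tot x y); rewrite h.
Qed.

Lemma v_m1 (K : fieldType) (G : porderZmodType) (v : K -> option G)
  (HG : ordered_abelian_group G) (Hv : is_valuation v) : v (-1) = Some 0.
Proof.
case: Hv => H0 Hm _ _. case: HG => tot Hadd.
have v1 : v 1 = Some 0.
  case E: (v 1) => [u|]; last by move/H0: E; move/eqP; rewrite oner_eq0.
  have := Hm 1 1; rewrite mulr1 E /= => -[] h; congr Some.
  apply: (@addrI _ u). by rewrite addr0 -h.
case E: (v (-1)) => [w|]; last by move/H0: E => /eqP; rewrite oppr_eq0 oner_eq0.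
have := Hm (-1) (-1); rewrite mulrNN mulr1 v1 E /= => -[] hw.
congr Some. case/orP: (tot 0 w) => h.
- have := Hadd _ _ w h; rewrite add0r -hw => h2. by apply: le_anti; rewrite h2 h.
- have := Hadd _ _ w h; rewrite add0r -hw => h2. by apply: le_anti; rewrite h h2.
Qed.

Lemma vgt_opp (K : fieldType) (G : porderZmodType) (v : K -> option G)
  (HG : ordered_abelian_group G) (Hv : is_valuation v) e x :
  vgt e (v x) -> vgt e (v (- x)).
Proof.
have Hm := Hv; case: Hm => _ Hm _ _.
by rewrite -mulN1r Hm (v_m1 HG Hv); case: (v x) => //= a; rewrite add0r.
Qed.

Lemma vgt_add (K : fieldType) (G : porderZmodType) (v : K -> option G)
  (HG : ordered_abelian_group G) (Hv : is_valuation v) e x y :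
  vgt e (v x) -> vgt e (v y) -> vgt e (v (x + y)).
Proof.
case: Hv => _ _ Hu _. case: HG => tot _.
case Ex: (v x) => [a|] /= hx; case Ey: (v y) => [b|] /= hy.
- pose g := if a <= b then a else b.
  have ga : g <= a.
    rewrite /g; case: ifP => h; first exact: lexx.
    by move: (tot a b); rewrite h.
  have gb : g <= b by rewrite /g; case: ifP => h //; exact: lexx.
  have eg : e < g by rewrite /g; case: ifP.
  have := Hu x y (Some g); rewrite Ex Ey /= => /(_ ga gb).
  case: (v (x+y)) => //= c hc. exact: lt_le_trans eg hc.
- have := Hu x y (Some a); rewrite Ex Ey /= => /(_ (lexx a) isT).
  case: (v (x+y)) => //= c hc. exact: lt_le_trans hx hc.
- have := Hu x y (Some b); rewrite Ex Ey /= => /(_ isT (lexx b)).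
  case: (v (x+y)) => //= c hc. exact: lt_le_trans hy hc.
- have := Hu x y None; rewrite Ex Ey /= => /(_ isT isT).
  by case: (v (x+y)).
Qed.

Lemma ball_sym (K : fieldType) (G : porderZmodType) (v : K -> option G)
  (HG : ordered_abelian_group G) (Hv : is_valuation v) k (x y : 'I_k -> K) e :
  ball_o v x e y -> ball_o v y e x.
Proof. move=> h i; rewrite -opprB; apply: (vgt_opp HG Hv); exact: h. Qed.

Lemma ball_trans (K : fieldType) (G : porderZmodType) (v : K -> option G)
  (HG : ordered_abelian_group G) (Hv : is_valuation v) k (x y z : 'I_k -> K) e :
  ball_o v x e y -> ball_o v y e z -> ball_o v x e z.
Proof.
move=> h1 h2 i.
have -> : z i - x i = (z i - y i) + (y i - x i) by rewrite addrA subrK.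
apply: (vgt_add HG Hv); [exact: h2 | exact: h1].
Qed.

Lemma ball_mono (K : fieldType) (G : porderZmodType) (v : K -> option G)
  k (x y : 'I_k -> K) eps e :
  eps <= e -> ball_o v x e y -> ball_o v x eps y.
Proof. move=> h hb i; move: (hb i); case: (v _) => //= g; exact: le_lt_trans h. Qed.

Lemma iso_min (K : fieldType) (G : porderZmodType) (v : K -> option G)
  (HG : ordered_abelian_group G) (Hv : is_valuation v) n m
  (X : ('I_n -> K) * ('I_m -> K) -> Prop) a L b :
  is_min_limit_set v X a L -> L b ->
  exists r, forall c, L c -> ball_o v b r c -> c = b.
Proof.
move=> [HL Hmin] Lb. apply: NNPP => Hno.
have Hc : forall r, exists c, L c /\ ball_o v b r c /\ c <> b.
  move=> r; apply: NNPP => h; apply: Hno; exists r => c Lc hb.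
  apply: NNPP => hcb; apply: h; exists c; auto.
apply: (Hmin (fun c => L c /\ c <> b)); [by move=> c [] | by exists b; split=>//; case |].
move=> eps. case: (HL eps) => delta Hd. exists delta => c hc pc ca.
case: (Hd c hc pc ca) => L1 [HL1 Hcov]. case: (Hc eps) => cb [Lcb [hcb cbb]].
exists (fun x => (L1 x /\ x <> b) \/ x = cb). split.
  by move=> x [[/HL1 ? ?]|->]; split.
move=> d hd. case: (Hcov d hd) => b1 [L1b1 hb1].
case: (classic (b1 = b)) => [eb|nb].
- exists cb; split; first by right.
  apply: (ball_trans HG Hv (ball_sym HG Hv hcb)). by rewrite -eb.
- exists b1; split; [by left | done].
Qed.

Lemma closed_far (K : fieldType) (G : porderZmodType) (v : K -> option G) k
  (L : ('I_k -> K) -> Prop) b :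
  vclosed v L -> ~ L b -> exists r, forall c, L c -> ball_o v b r c -> False.
Proof.
move=> Hc nb; apply: NNPP => h; apply: nb; apply: Hc => eps; apply: NNPP => h2.
apply: h; exists eps => c Lc hb; apply: h2; exists c; done.
Qed.

Lemma iso_any (K : fieldType) (G : porderZmodType) (v : K -> option G)
  (HG : ordered_abelian_group G) (Hv : is_valuation v) n m
  (X : ('I_n -> K) * ('I_m -> K) -> Prop) a L b :
  lim_is v X a L -> exists r, forall c, L c -> ball_o v b r c -> c = b.
Proof.
move=> [C M]. case: (classic (L b)) => Lb; first exact: (iso_min HG Hv M Lb).
case: (closed_far C Lb) => r f; exists r => c Lc hc; exfalso; exact: f c Lc hc.
Qed.

Lemma key (K : fieldType) (G : porderZmodType) (v : K -> option G)
  (HG : ordered_abelian_group G) (Hv : is_valuation v) n m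
  (X1 X : ('I_n -> K) * ('I_m -> K) -> Prop) a L1 L' b r :
  is_min_limit_set v X1 a L1 -> (forall p, X1 p -> X p) ->
  is_limit_set v X a L' -> L1 b -> ~ L' b ->
  (forall c, L' c -> ball_o v b r c -> c = b) -> False.
Proof.
move=> [HL1 Hmin] HX HL' Lb nLb Hiso.
apply: (Hmin (fun c => L1 c /\ c <> b)); [by move=> c [] | by exists b; split=>//; case |].
move=> eps. pose e := mx eps r.
case: (HL1 e) => d1 Hd1; case: (HL' e) => d2 Hd2.
exists (mx d1 d2) => c hc pc ca.
have hc1 := ball_mono (mx_l HG d1 d2) hc.
have hc2 := ball_mono (mx_r HG d1 d2) hc.
case: (Hd1 c hc1 pc ca) => S1 [HS1 Hcov1].
have pc' : pr_le X c by case: pc => d hd; exists d; apply: HX.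
case: (Hd2 c hc2 pc' ca) => S2 [HS2 Hcov2].
exists (fun x => S1 x /\ x <> b); split; first by move=> x [/HS1 ? ?].
move=> d hd. case: (Hcov1 d hd) => b1 [S1b1 hb1].
case: (classic (b1 = b)) => [eb|nb].
- exfalso. case: (Hcov2 d (HX _ hd)) => b' [S2b' hb'].
  have hbe : ball_o v b e d by rewrite -eb.
  have hbb' : ball_o v b e b' := ball_trans HG Hv hbe (ball_sym HG Hv hb').
  apply: nLb.
  have eb' := Hiso b' (HS2 _ S2b') (ball_mono (mx_r HG eps r) hbb').
  rewrite -eb'; exact: HS2.
- exists b1; split; first by split.
  exact: ball_mono (mx_l HG eps r) hb1.
Qed.

Theorem lemma3p3 (K : closedFieldType) (G : porderZmodType) (v : K -> option G)
  (HG : ordered_abelian_group G) (Hv : is_valuation v)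
  (n m : nat) (X1 X2 : ('I_n -> K) * ('I_m -> K) -> Prop)
  (Z : ('I_n -> K) -> Prop) (a : 'I_n -> K) (L1 L2 : ('I_m -> K) -> Prop) :
  (forall c, pr_le X1 c <-> Z c) -> (forall c, pr_le X2 c <-> Z c) ->
  lim_is v X1 a L1 -> lim_is v X2 a L2 ->
  lim_is v (fun p => X1 p \/ X2 p) a (fun b => L1 b \/ L2 b).
Proof.
move=> HZ1 HZ2 Hl1 Hl2.
have [C1 [H1 M1]] := Hl1; have [C2 [H2 M2]] := Hl2.
split.
  move=> b Hb. apply: NNPP => nb.
  have n1 : ~ L1 b by auto.
  have n2 : ~ L2 b by auto.
  case: (closed_far C1 n1) => r1 f1; case: (closed_far C2 n2) => r2 f2.
  case: (Hb (mx r1 r2)) => c [[Lc|Lc] hc].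
    exact: f1 c Lc (ball_mono (mx_l HG r1 r2) hc).
  exact: f2 c Lc (ball_mono (mx_r HG r1 r2) hc).
split.
  move=> eps. case: (H1 eps) => d1 Hd1; case: (H2 eps) => d2 Hd2.
  exists (mx d1 d2) => c hc pc ca.
  have z : Z c by case: pc => d [hd|hd]; [apply/HZ1|apply/HZ2]; exists d.
  have p1 : pr_le X1 c by apply/HZ1.
  have p2 : pr_le X2 c by apply/HZ2.
  case: (Hd1 c (ball_mono (mx_l HG d1 d2) hc) p1 ca) => S1 [HS1 C1'].
  case: (Hd2 c (ball_mono (mx_r HG d1 d2) hc) p2 ca) => S2 [HS2 C2'].
  exists (fun x => S1 x \/ S2 x); split.
    by move=> x [/HS1|/HS2]; auto.
  move=> d [hd|hd].
    by case: (C1' d hd) => x [? ?]; exists x; split; auto.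
  by case: (C2' d hd) => x [? ?]; exists x; split; auto.
move=> L' HL' [b [Lb nL'b]] HlimL'.
case: (iso_any HG Hv b Hl1) => r1 h1.
case: (iso_any HG Hv b Hl2) => r2 h2.
have Hiso : forall c, L' c -> ball_o v b (mx r1 r2) c -> c = b.
  move=> c /HL' [Lc|Lc] hc.
    exact: h1 c Lc (ball_mono (mx_l HG r1 r2) hc).
  exact: h2 c Lc (ball_mono (mx_r HG r1 r2) hc).
case: Lb => Lb.
  exact: (key HG Hv (conj H1 M1) (fun p hp => or_introl hp) HlimL' Lb nL'b Hiso).
exact: (key HG Hv (conj H2 M2) (fun p hp => or_intror hp) HlimL' Lb nL'b Hiso).
Qed.
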